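(* Let $n \geq 2$ and let $s=(s_1,s_2,\ldots,s_n)$ be a sequence of numbers from $\{0,1,2\}$. Then the cardinality of the set \[ \{(x_1,\ldots,x_n)\in \{0,1\}^n \mid x_1+x_2\neq s_1,\ x_2+x_3\neq s_2,\ \ldots,\ x_{n-1}+x_n\neq s_{n-1},\ \textrm{and } x_n+x_1\neq s_n\} \] is at most $\ell(n)$.
   Context: The Fibonacci numbers are defined for all integers by $\varphi(0)=0$, $\varphi(1)=1$ and $\varphi(n)=\varphi(n-1)+\varphi(n-2)$. The Lucas numbers are defined by $\ell(n)=\varphi(n-1)+\varphi(n+1)$ (so $\ell(1)=1,\ell(2)=3,\ell(3)=4,\ell(4)=7,\dots$). *)

(* Defs.v *)
From mathcomp Require Import all_boot.
Set Implicit Arguments. Unset Strict Implicit. Unset Printing Implicit Defensive.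

Fixpoint fib (n : nat) : nat :=
  match n with
  | 0 => 0
  | 1 => 1
  | (m.+1 as p).+1 => fib p + fib m
  end.

(* Lucas numbers l(n) = fib(n-1) + fib(n+1), for n >= 1 (only used for n >= 2). *)
Definition lucas (n : nat) : nat := fib n.-1 + fib n.+1.

Definition avoid_set (n : nat) (s : 'I_n -> nat) : {set {ffun 'I_n -> bool}} :=
  [set x : {ffun 'I_n -> bool} |
     [forall i : 'I_n,
        (nat_of_bool (x i) + nat_of_bool (x (ordS i)) != s i)]].

(* Main.v *)
Require Import Defs.
From mathcomp Require Import all_boot.
From mathcomp Require Import zify.
Set Implicit Arguments. Unset Strict Implicit. Unset Printing Implicit Defensive.

Definition okb (a c : bool) (t : nat) : bool := (nat_of_bool a + nat_of_bool c != t).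

Fixpoint W (ts : seq nat) (a b : bool) : nat :=
  match ts with
  | [::] => nat_of_bool (a == b)
  | t :: ts' => okb a false t * W ts' false b + okb a true t * W ts' true b
  end.

Definition T ts := W ts false false + W ts true true.

Lemma fibSS k : fib k.+2 = fib k.+1 + fib k. Proof. by []. Qed.
Arguments fib : simpl never.
Lemma fib0 : fib 0 = 0. Proof. by []. Qed.
Lemma fib1 : fib 1 = 1. Proof. by []. Qed.

Lemma fib_le1 k : fib k <= fib k.+1.
Proof. case: k => // k; rewrite fibSS; lia. Qed.

Lemma fib_mono m n : m <= n -> fib m <= fib n.
Proof.
elim: n => [|n IH]; first by rewrite leqn0 => /eqP ->.
rewrite leq_eqVlt => /orP [/eqP -> //|]; rewrite ltnS => /IH H.
exact: leq_trans H (fib_le1 n).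
Qed.

Lemma W_cat (u v : seq nat) a b :
  W (u ++ v) a b = W u a false * W v false b + W u a true * W v true b.
Proof.
elim: u a => [|t u IH] a /=; first by case: a => /=; lia.
rewrite !IH !mulnDr !mulnDl !mulnA; lia.
Qed.

Lemma T_rot (u v : seq nat) : T (u ++ v) = T (v ++ u).
Proof. rewrite /T !W_cat; rewrite [W v _ _ * W u _ _]mulnC [W v _ _ * W u _ _]mulnC [W v _ _ * W u _ _]mulnC [W v _ _ * W u _ _]mulnC; lia. Qed.

Lemma W_filter (ts : seq nat) a b : W ts a b = W (filter (fun t => t != 1) ts) a b.
Proof.
elim: ts a b => [|t ts IH] a b //=.
case: eqP => [->|_] /=; last by rewrite !IH.
by case: a; rewrite /okb /= !IH !mul0n !mul1n ?addn0.
Qed.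

Lemma W_inv (Q : seq nat) : all (fun t => t <= 2) Q ->
  (forall a b, W Q a b <= fib (size Q).+1) /\
  (forall b, W Q false b + W Q true b <= fib (size Q).+2).
Proof.
elim: Q => [|t Q IH] /=; first by split; [case; case | case].
case/andP=> Ht /IH [H1 H2].
have F := fib_le1 (size Q).+1.
rewrite !fibSS in F *.
have A b := H1 false b; have B b := H1 true b; have C b := H2 b.
move: Ht; case: t => [|[|[|t]]] // _; split => [a b|b]; rewrite ?fibSS in A B C;
  try case: a; rewrite /okb /=;
  move: (A b) (B b) (C b); lia.
Qed.

Definition flip (t : nat) := 2 - t.

Lemma W_flip (ts : seq nat) a b : all (fun t => t <= 2) ts ->
  W (map flip ts) (~~ a) (~~ b) = W ts a b.
Proof.
elim: ts a => [|t ts IH] a /=; first by case: a; case: b.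
case/andP=> Ht Hts.
have E1 := IH true Hts; have E2 := IH false Hts. simpl in E1, E2.
rewrite E1 E2.
move: Ht; case: t => [|[|[|t]]] // _; case: a; rewrite /okb /flip /=; lia.
Qed.

Lemma W_all2 (ts : seq nat) : all (fun t => t == 2) ts ->
  [/\ W ts false false = fib (size ts).+1, W ts false true = fib (size ts),
      W ts true false = fib (size ts) & W ts true true + fib (size ts) = fib (size ts).+1].
Proof.
elim: ts => [|t ts IH] /=; first by rewrite fib0 fib1.
case/andP=> /eqP -> /IH [A B C D]; rewrite /okb /= A B C.
split; rewrite ?fibSS; lia.
Qed.

Lemma adj (g : seq nat) : 2 \in g -> all (fun t => (t == 0) || (t == 2)) g ->
  exists u v, 0 :: g = u ++ 0 :: 2 :: v.
Proof.
elim: g => [|c g IH] //.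
rewrite inE /= => Hin /andP [Hc Hg].
case: (c =P 2) => [->|Hc2]; first by exists [::], g.
have c0 : c = 0 by move: Hc Hc2; case/orP => /eqP.
have Hin' : 2 \in g by move: Hin; rewrite c0.
have [u [v E]] := IH Hin' Hg.
by exists (0 :: u), v; rewrite c0 E.
Qed.

Lemma T_mixed Q : T (2 :: Q ++ [:: 0]) = W Q false true + W Q true true + W Q false false + W Q false true.
Proof. rewrite /T /= !W_cat /= /okb /=; lia. Qed.

Lemma lucas_mono k n : 1 <= k <= n -> fib k.-1 + fib k.+1 <= lucas n.
Proof.
case/andP=> H1 H2; rewrite /lucas.
have := fib_mono (_ : k.-1 <= n.-1); have := fib_mono (_ : k.+1 <= n.+1).
move=> A B; have := A ltac:(lia); have := B ltac:(lia); lia.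
Qed.

Lemma all_rot (i : nat) (a : pred nat) (s : seq nat) : all a (rot i s) = all a s.
Proof. by rewrite /rot all_cat andbC -all_cat cat_take_drop. Qed.

Lemma T_bound (f : seq nat) (n : nat) : 2 <= n -> size f <= n -> all (fun t => t <= 2) f ->
  all (fun t => t != 1) f -> T f <= lucas n.
Proof.
move=> Hn Hs H2 H1.
have all02 : all (fun t => (t == 0) || (t == 2)) f.
  apply/allP => t tf; move/allP: H2 => /(_ t tf); move/allP: H1 => /(_ t tf).
  case: t {tf} => [|[|[|t]]] //.
have bound2 : forall g : seq nat, size g <= n -> all (fun t => t == 2) g -> T g <= lucas n.
  move=> g Hg /W_all2 [A B C D]; rewrite /T A.
  case Eg: (size g) => [|k].
    rewrite Eg fib0 fib1 in D; rewrite fib1 (_ : W g true true = 1); last lia.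
    have := lucas_mono (k:=2) (n:=n); rewrite !fibSS fib1 fib0 => L; have := L ltac:(lia); lia.
  rewrite Eg fibSS in D.
  have := lucas_mono (k:=k.+1) (n:=n) ltac:(lia); rewrite /=; lia.
case H0: (0 \in f); case H2': (2 \in f).
-
  pose i := index 0 f.
  have ET : T f = T (rot i f) by rewrite /rot -T_rot cat_take_drop.
  have Hr : rot i f = 0 :: behead (rot i f).
    have : 0 < size (rot i f) by rewrite size_rot; case: f H0 {ET i all02 Hs H1 H2 H2'}.
    have : nth 0 (rot i f) 0 = 0 by rewrite /rot nth_cat size_drop subn_gt0 index_mem H0 nth_drop addn0 nth_index.
    by case: (rot i f) => [|x l] //= ->.
  have Hg : 2 \in behead (rot i f).
    by move: H2'; rewrite -(mem_rot i) Hr inE.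
  have Ag : all (fun t => (t == 0) || (t == 2)) (behead (rot i f)).
    by move: all02; rewrite -(all_rot i) Hr => /andP[].
  have [u [v E]] := adj Hg Ag.
  rewrite -Hr in E.
  have ET2 : T f = T (2 :: (v ++ u) ++ [:: 0]).
    by rewrite ET E -cat1s catA T_rot -!catA.
  have Sz : size (v ++ u) + 2 = size f.
    by rewrite -(size_rot i f) E !size_cat /=; lia.
  have Avu : all (fun t => t <= 2) (v ++ u).
    by move: H2; rewrite -(all_rot i) E !all_cat /= andbC.
  have [I1 I2] := W_inv Avu.
  rewrite ET2 T_mixed.
  have := I2 true; have := I1 false false; have := I1 false true.
  set k := size (v ++ u); move=> A B C.
  have := lucas_mono (k := k.+2) (n := n) ltac:(lia); rewrite /= !fibSS in C *; lia.
- have -> : T f = T (map flip f) by rewrite /T -(W_flip false false H2) -(W_flip true true H2) /= addnC.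
  apply: bound2; first by rewrite size_map.
  apply/allP => t /mapP [t' tf ->].
  by move/allP: all02 => /(_ t' tf) /orP [/eqP -> //|/eqP E]; move: H2'; rewrite -E tf.
- apply: bound2 => //; apply/allP => t tf.
  by move/allP: all02 => /(_ t tf) /orP [/eqP E|//]; move: H0; rewrite -E tf.
- apply: bound2 => //; apply/allP => t tf.
  by move/allP: all02 => /(_ t tf) /orP [/eqP E|//]; move: H0; rewrite -E tf.
Qed.

Fixpoint pok (a : bool) (ts : seq nat) (l : seq bool) (b : bool) : bool :=
  match ts, l with
  | [::], [::] => a == b
  | t :: ts', c :: l' => okb a c t && pok c ts' l' b
  | _, _ => false
  end.

Fixpoint allseq (m : nat) : seq (seq bool) :=
  match m with
  | 0 => [:: [::]]
  | m'.+1 => map (cons false) (allseq m') ++ map (cons true) (allseq m')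
  end.

Lemma mem_allseq (l : seq bool) m : size l = m -> l \in allseq m.
Proof.
elim: m l => [|m IH] [|c l] //= [Hs].
rewrite mem_cat; case: c; apply/orP; [right|left]; apply: map_f; exact: IH.
Qed.

Lemma count_and (c : bool) (P : pred (seq bool)) s :
  count (fun l => c && P l) s = c * count P s.
Proof. by case: c; rewrite /= ?mul1n ?mul0n //; elim: s. Qed.

Lemma count_W (ts : seq nat) a b :
  count (fun l => pok a ts l b) (allseq (size ts)) = W ts a b.
Proof.
elim: ts a => [|t ts IH] a /=; first by rewrite addn0.
by rewrite count_cat !count_map /= !count_and !IH.
Qed.

Lemma count_or (p q : pred (seq bool)) s :
  count (fun l => p l || q l) s <= count p s + count q s.
Proof. elim: s => //= x s IH; case: (p x); case: (q x) => /=; lia. Qed.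

Lemma pok_intro a (ts : seq nat) (l : seq bool) b : size ts = size l ->
  (forall i, i < size ts ->
     nat_of_bool (nth false (a :: l) i) + nat_of_bool (nth false l i) != nth 0 ts i) ->
  last a l = b -> pok a ts l b.
Proof.
elim: ts a l => [|t ts IH] a [|c l] //=; first by move=> _ _ ->.
move=> [Hs] H Hl; rewrite /okb (H 0 erefl) /=.
apply: IH => // i Hi; exact: (H i.+1 Hi).
Qed.

Lemma card_bound (n : nat) (s : 'I_n -> nat) : 0 < n ->
  #|avoid_set s| <= T [seq s i | i <- enum 'I_n].
Proof.
move=> n0; pose i0 := Ordinal n0.
set ts := [seq s i | i <- enum 'I_n].
pose phi (x : {ffun 'I_n -> bool}) := [seq x (ordS i) | i <- enum 'I_n].
pose P := fun l => pok false ts l false || pok true ts l true.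
have Sts : size ts = n by rewrite size_map size_enum_ord.
have phi_inj : injective phi.
  move=> x y /eq_in_map E; apply/ffunP => k.
  by rewrite -(ord_predK k); apply: E; rewrite mem_enum.
have Hsub : {subset map phi (enum (avoid_set s)) <= filter P (allseq n)}.
  move=> l /mapP [x]; rewrite mem_enum inE => /forallP Hx ->.
  rewrite mem_filter mem_allseq ?andbT; last by rewrite size_map size_enum_ord.
  have key : pok (x i0) ts (phi x) (x i0).
    apply: pok_intro; first by rewrite Sts size_map size_enum_ord.
    - move=> i; rewrite Sts => Hi.
      pose j := nth i0 (enum 'I_n) i.
      have vj : val j = i by exact: nth_enum_ord.
      rewrite (nth_map i0) ?size_enum_ord // -/j.
      rewrite /phi (nth_map i0) ?size_enum_ord // -/j.
      suff -> : nth false (x i0 :: [seq x (ordS i1) | i1 <- enum 'I_n]) i = x j by apply: Hx.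
      case: i Hi @j vj => [|i] Hi j vj /=.
        by congr (x _); apply: val_inj; rewrite /= vj.
      rewrite (nth_map i0) ?size_enum_ord; last by lia.
      congr (x _); apply: val_inj; rewrite /= nth_enum_ord ?vj; last by lia.
      by rewrite modn_small.
    - rewrite -nth_last /phi size_map size_enum_ord (nth_map i0) ?size_enum_ord; last by lia.
      congr (x _); apply: val_inj; rewrite /= nth_enum_ord; last by lia.
      by rewrite prednK // modnn.
  by rewrite /P; case: (x i0) key => ->; rewrite ?orbT.
have U : uniq (map phi (enum (avoid_set s))) by rewrite map_inj_uniq // enum_uniq.
have := uniq_leq_size U Hsub.
rewrite size_map -cardE size_filter => H; apply: leq_trans H _.
apply: leq_trans (count_or _ _ _) _.
by rewrite /T -Sts !count_W.
Qed.

Theorem lemma3p1 (n : nat) (s : 'I_n -> nat) :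
  2 <= n -> (forall i, s i <= 2) -> #|avoid_set s| <= lucas n.
Proof.
move=> Hn Hs.
apply: leq_trans (card_bound s (ltnW Hn)) _.
rewrite /T !(W_filter [seq s i | i <- enum 'I_n]) -/(T _).
apply: T_bound => //.
- by rewrite size_filter (leq_trans (count_size _ _)) // size_map size_enum_ord.
- by apply/allP => t; rewrite mem_filter => /andP [_ /mapP [i _ ->]].
- by apply/allP => t; rewrite mem_filter => /andP [].
Qed.
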